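(* Let $q$ be a prime power, $1\le k\le n\le m$, let $g_1,\dots,g_n\in\mathbb{F}_{q^m}$ be linearly independent over $\mathbb{F}_q$, and let $\mathcal{G}$ be the Gabidulin code of dimension $k$ with respect to $g_1,\dots,g_n$. Let $f\in\mathcal{L}_q(x,\mathbb{F}_{q^m})$ with $k\le\deg_q(f)<n$ and let $\sigma_f=(f(g_1),\dots,f(g_n))$. Then $$d_R(\sigma_f,\mathcal{G})\ge n-\deg_q(f).$$ Moreover, if $f$ is monic, then $d_R(\sigma_f,\mathcal{G})=n-\deg_q(f)$ if and only if there exist an $\mathbb{F}_q$-subspace $H\subseteq\langle g_1,\dots,g_n\rangle$ of dimension $\deg_q(f)$ and $v\in\mathcal{L}_q(x,\mathbb{F}_{q^m})$ with $v=0$ or $\deg_q(v)\le k-1$ such that $$f(x)-v(x)=\prod_{h\in H}(x-h).$$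
   Context: A $q$-linearized polynomial over $\mathbb{F}_{q^m}$ is a polynomial $L(x)=\sum_{i=0}^{d}a_ix^{q^i}$ with $a_i\in\mathbb{F}_{q^m}$; if $a_d\ne0$, $d$ is its $q$-degree $\deg_q(L)$; $L$ is monic if $a_d=1$. $\mathcal{L}_q(x,\mathbb{F}_{q^m})$ is the set of these. Rank weight: fix a basis of $\mathbb{F}_{q^m}$ over $\mathbb{F}_q$; for $\mathbf{u}=(u_1,\dots,u_n)\in\mathbb{F}_{q^m}^n$, $w_R(\mathbf{u})$ is the rank of the $m\times n$ matrix over $\mathbb{F}_q$ whose $j$-th column is the coordinate vector of $u_j$ (equivalently $\dim_{\mathbb{F}_q}\langle u_1,\dots,u_n\rangle$). $d_R(\mathbf{u},\mathbf{v})=w_R(\mathbf{u}-\mathbf{v})$ and $d_R(\mathbf{u},C)=\min_{\mathbf{c}\in C}d_R(\mathbf{u},\mathbf{c})$. The Gabidulin code of dimension $k$ with respect to $\mathbb{F}_q$-linearly independent $g_1,\dots,g_n\in\mathbb{F}_{q^m}$ is $\mathcal{G}=\{(v(g_1),\dots,v(g_n)) : v\in\mathcal{L}_q(x,\mathbb{F}_{q^m}),\ v=0\text{ or }\deg_q(v)<k\}\subseteq\mathbb{F}_{q^m}^n$. *)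

(* Defs.v *)
From HB Require Import structures.
From mathcomp Require Import all_boot all_order all_algebra all_field.
From Stdlib Require Import ClassicalEpsilon.
Set Implicit Arguments. Unset Strict Implicit. Unset Printing Implicit Defensive.
Import GRing.Theory.
Local Open Scope ring_scope.

(* F plays the role of F_q (q = #|F|), L that of F_{q^m} (m = \dim {:L}). *)

Definition qlin (F : finFieldType) (L : fieldExtType F) (p : {poly L}) : Prop :=
  forall i : nat, p`_i != 0 -> exists j : nat, i = (#|F| ^ j)%N.

(* q-degree: for a nonzero q-linearized p with p = ... + a_d x^(q^d), a_d <> 0,
   size p = q^d + 1, hence qdeg p = d. *)
Definition qdeg (F : finFieldType) (L : fieldExtType F) (p : {poly L}) : nat :=
  trunc_log #|F| (size p).-1.

Definition wR (F : finFieldType) (L : fieldExtType F) (n : nat) (u : 'rV[L]_n) : nat :=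
  \dim <<[seq u ord0 j | j <- enum 'I_n]>>%VS.

Definition gab (F : finFieldType) (L : fieldExtType F) (n : nat) (g : 'I_n -> L)
  (k : nat) (c : 'rV[L]_n) : Prop :=
  exists v : {poly L}, qlin v /\ (v = 0 \/ (qdeg v < k)%N) /\
    forall j : 'I_n, c ord0 j = v.[g j].

Definition pbool (P : Prop) : bool :=
  if excluded_middle_informative P then true else false.

(* rank distance from u to the set C: min of wR (u - c), c in C (0 if C empty) *)
Definition dRC (F : finFieldType) (L : fieldExtType F) (n : nat)
  (u : 'rV[L]_n) (C : 'rV[L]_n -> Prop) : nat :=
  let P := fun r : nat => pbool (exists c, C c /\ wR (u - c) = r) in
  match excluded_middle_informative (exists r, P r) with
  | left H => ex_minn H
  | right _ => 0%N
  end.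

Definition sigma (F : finFieldType) (L : fieldExtType F) (n : nat) (g : 'I_n -> L)
  (f : {poly L}) : 'rV[L]_n := \row_j f.[g j].

(* Main.v *)
Require Import Defs.
From HB Require Import structures.
From mathcomp Require Import all_boot all_order all_algebra all_field all_fingroup all_solvable zify.
From Stdlib Require Import ClassicalEpsilon.
Set Implicit Arguments. Unset Strict Implicit. Unset Printing Implicit Defensive.
Import GRing.Theory.
Local Open Scope ring_scope.

Section S.
Variables (F : finFieldType) (L : fieldExtType F).
Local Notation q := #|F|.

Lemma q_gt1 : (1 < q)%N. Proof. exact: finNzRing_gt1. Qed.

Lemma frobD (x y : L) : (x + y) ^+ q = x ^+ q + y ^+ q.
Proof.
have [p pr_p chFp] := finPcharP F.
have chLp : p \in [pchar L] := rmorph_pchar (in_alg L) chFp.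
apply: exprDn_pchar.
have /abelem_pgroup : (p.-abelem [set: F])%g := fin_ring_pchar_abelem chFp.
rewrite /pgroup cardsT => pn.
by rewrite (eq_pnat _ (pcharf_eq chLp)).
Qed.

Lemma frobZ (a : F) (x : L) : (a *: x) ^+ q = a *: x ^+ q.
Proof.
rewrite -[a *: x]mulr_algl -[a *: x ^+ q]mulr_algl exprMn.
congr (_ * _).
have -> : (a%:A : L) ^+ q = (a ^+ q)%:A by rewrite -(rmorphXn (in_alg L)).
by rewrite expf_card.
Qed.

Lemma frobjD j (x y : L) : (x + y) ^+ (q ^ j) = x ^+ (q ^ j) + y ^+ (q ^ j).
Proof.
elim: j => [|j IH]; first by rewrite !expr1.
by rewrite expnSr !exprM IH frobD.
Qed.

Lemma frobjZ j (a : F) (x : L) : (a *: x) ^+ (q ^ j) = a *: x ^+ (q ^ j).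
Proof.
elim: j => [|j IH]; first by rewrite !expr1.
by rewrite expnSr !exprM IH frobZ.
Qed.

Definition isq (i : nat) : bool := [exists j : 'I_i.+1, i == (q ^ j)%N].

Lemma isqP i : reflect (exists j, i = (q ^ j)%N) (isq i).
Proof.
apply: (iffP existsP) => [[j /eqP ->]|[j ->]]; first by exists j.
have lt : (j < (q ^ j).+1)%N by rewrite ltnS ltnW // ltn_expl // q_gt1.
by exists (Ordinal lt).
Qed.

Definition qev (p : {poly L}) (x : L) : L := \sum_(i < size p | isq i) p`_i * x ^+ i.

Lemma qevE p x : qlin p -> qev p x = p.[x].
Proof.
move=> qp; rewrite horner_coef /qev [RHS](bigID (fun i : 'I_(size p) => isq i)) /=.
rewrite [X in _ = _ + X]big1 ?addr0 // => i /negP ni.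
case: (eqVneq p`_i 0) => [->|/qp [j ij]]; first by rewrite mul0r.
by case: ni; apply/isqP; exists j.
Qed.

Lemma qev_lin p : linear_for *:%R (qev p).
Proof.
move=> a x y; rewrite /qev scaler_sumr -big_split /=; apply: eq_bigr => i /isqP [j ->].
by rewrite frobjD frobjZ mulrDr scalerAr.
Qed.

HB.instance Definition _ p := @GRing.isLinear.Build F L L *:%R (qev p) (qev_lin p).

Definition phi p : 'End(L) := linfun (qev p).

Lemma phiE p x : qlin p -> phi p x = p.[x].
Proof. by move=> qp; rewrite lfunE /= qevE. Qed.


Lemma size_qlin (p : {poly L}) : qlin p -> p != 0 -> size p = (q ^ qdeg p).+1.
Proof.
move=> qp nz.
have : p`_(size p).-1 != 0 by rewrite -lead_coefE lead_coef_eq0.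
case/qp => j hj.
by rewrite /qdeg hj trunc_expnK ?q_gt1 // -hj prednK // size_poly_gt0.
Qed.

Lemma card_fv (U : {vspace L}) :
  #|[pred x : finvect_type L | x \in U]| = (q ^ \dim U)%N.
Proof. exact: (@card_vspace F (finvect_type L) _ U). Qed.

Lemma roots_dim (p : {poly L}) (U : {vspace L}) : p != 0 -> qlin p ->
  (forall x, x \in U -> p.[x] = 0) -> (\dim U <= qdeg p)%N.
Proof.
move=> nz qp hU.
pose A := [pred x : finvect_type L | x \in U].
have e : size (enum A) = (q ^ \dim U)%N by rewrite -cardE card_fv.
have hall : all (root p) (enum A).
  apply/allP => x hx; have : x \in U by rewrite -(@mem_enum (finvect_type L)); exact hx.
  by move=> /hU hx'; rewrite /root hx'.
have := max_poly_roots nz hall (enum_uniq _).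
rewrite e size_qlin // ltnS.
by rewrite leq_exp2l ?q_gt1.
Qed.

Lemma prod_eq (p : {poly L}) (K : {vspace L}) : p \is monic -> size p = (q ^ \dim K).+1 ->
  (forall x, x \in K -> p.[x] = 0) ->
  p = \prod_(h : finvect_type L | h \in K) ('X - (h : L)%:P).
Proof.
move=> mp sp hK.
set rs := enum [pred x : finvect_type L | x \in K].
have [r er] : exists r, p = r * \prod_(z <- rs) ('X - z%:P).
  apply: uniq_roots_prod_XsubC; last by rewrite uniq_rootsE enum_uniq.
  by apply/allP => x; rewrite mem_enum => /hK hx; rewrite /root hx.
have -> : \prod_(h : finvect_type L | h \in K) ('X - (h : L)%:P) =
          \prod_(z <- rs) ('X - z%:P) by rewrite big_enum.
have szp : size (\prod_(z <- rs) ('X - z%:P)) = (q ^ \dim K).+1.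
  by rewrite size_prod_XsubC /rs -cardE card_fv.
have mpr : \prod_(z <- rs) ('X - z%:P) \is monic by apply: monic_prod_XsubC.
have nzr : r != 0 by apply: contraTneq mp => r0; rewrite er r0 mul0r monicE lead_coef0 eq_sym oner_eq0.
have sr : size r = 1%N.
  move: sp; rewrite er size_Mmonic // szp => /eqP.
  by rewrite addnS /= -[X in _ == X]add1n => /eqP /addIn.
move/eqP: sr => /size_poly1P [c c0 rc].
move: mp; rewrite er rc monicE lead_coef_Mmonic // lead_coefC => /eqP ->.
by rewrite mul1r.
Qed.


Lemma pboolE (P : Prop) : pbool P = true <-> P.
Proof. by rewrite /pbool; case: excluded_middle_informative. Qed.

Section DRC.
Variables (n : nat) (u : 'rV[L]_n) (C : 'rV[L]_n -> Prop).
Hypothesis Cne : exists c, C c.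

Lemma dRC_att : exists c, C c /\ wR (u - c) = dRC u C.
Proof.
rewrite /dRC; case: excluded_middle_informative => [H|nH].
  by case: ex_minnP => m /pboolE.
by case: nH; case: Cne => c Cc; exists (wR (u - c)); apply/pboolE; exists c.
Qed.

Lemma dRC_ub c : C c -> (dRC u C <= wR (u - c))%N.
Proof.
move=> Cc; rewrite /dRC; case: excluded_middle_informative => [H|nH].
  by case: ex_minnP => m _; apply; apply/pboolE; exists c.
by case: nH; exists (wR (u - c)); apply/pboolE; exists c.
Qed.

Lemma dRC_lb lb : (forall c, C c -> lb <= wR (u - c))%N -> (lb <= dRC u C)%N.
Proof. by move=> hlb; have [c [Cc <-]] := dRC_att; apply: hlb. Qed.

End DRC.

Lemma wR_row n (g : 'I_n -> L) (p : {poly L}) : qlin p ->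
  free [seq g i | i <- enum 'I_n] ->
  (wR (\row_j p.[g j]) + \dim (<<[seq g i | i <- enum 'I_n]>> :&: lker (phi p)) = n)%N.
Proof.
move=> qp fr; rewrite /wR.
have -> : [seq (\row_j p.[g j]) ord0 j | j <- enum 'I_n] =
          map (phi p) [seq g i | i <- enum 'I_n].
  rewrite -[RHS]map_comp enumT; by apply: eq_map => j /=; rewrite mxE phiE.
rewrite -(limg_span (phi p)) addnC limg_ker_dim (eqP fr) size_map.
by rewrite -cardE card_ord.
Qed.

Lemma ker_roots (p : {poly L}) (U : {vspace L}) : qlin p ->
  forall x, x \in (U :&: lker (phi p))%VS -> p.[x] = 0.
Proof. by move=> qp x; rewrite memv_cap memv_ker phiE // => /andP [_ /eqP]. Qed.

End S.

Theorem theorem1 (F : finFieldType) (L : fieldExtType F) (n k : nat)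
  (g : 'I_n -> L) (f : {poly L}) :
  (1 <= k)%N -> (k <= n)%N -> (n <= \dim {:L})%N ->
  free [seq g i | i <- enum 'I_n] ->
  qlin f -> f != 0 -> (k <= qdeg f)%N -> (qdeg f < n)%N ->
  (n - qdeg f <= dRC (sigma g f) (gab g k))%N /\
  (f \is monic ->
    (dRC (sigma g f) (gab g k) = (n - qdeg f)%N <->
     exists H : {vspace L},
       (H <= <<[seq g i | i <- enum 'I_n]>>)%VS /\ \dim H = qdeg f /\
       exists v : {poly L}, qlin v /\ (v = 0 \/ (qdeg v <= k - 1)%N) /\
         f - v = \prod_(h : finvect_type L | h \in H) ('X - (h : L)%:P))).
Proof.
move=> k1 kn nm fr qf fnz kd dn.
set d := qdeg f in kd dn *.
set U := <<[seq g i | i <- enum 'I_n]>>%VS.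
have sf := size_qlin qf fnz.
rewrite -/d in sf; clearbody d.
have Hp : forall v : {poly L}, qlin v -> (v = 0 \/ (qdeg v < k)%N) ->
   [/\ qlin (f - v), f - v != 0, size (f - v) = (#|F| ^ d).+1,
       qdeg (f - v) = d & (f \is monic -> f - v \is monic)].
  move=> v qv hv.
  have svf : (size (- v) < size f)%N.
    rewrite size_polyN sf; case: hv => [->|hv]; first by rewrite size_poly0.
    case: (eqVneq v 0) => [->|vnz]; first by rewrite size_poly0.
    by rewrite size_qlin // ltnS ltn_exp2l ?q_gt1 //; exact: leq_trans hv kd.
  have sp : size (f - v) = (#|F| ^ d).+1 by rewrite size_polyDl // sf.
  split.
  - move=> i; rewrite coefB => hi.
    case: (eqVneq f`_i 0) => [fi|/qf //]; apply: qv.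
    by move: hi; rewrite fi sub0r oppr_eq0.
  - by rewrite -size_poly_eq0 sp.
  - exact: sp.
  - by rewrite /qdeg sp /= trunc_expnK // q_gt1.
  - by move=> mf; rewrite monicE lead_coefDl // -monicE.
have gab0 : exists c, gab g k c.
  exists 0; exists 0; split; first by move=> i; rewrite coef0 eqxx.
  by split; [left | move=> j; rewrite mxE horner0].
have rowE : forall (c : 'rV[L]_n) (v : {poly L}), (forall j, c ord0 j = v.[g j]) ->
   sigma g f - c = \row_j (f - v).[g j].
  move=> c v hc; apply/rowP => j; rewrite /sigma !mxE hc.
  by rewrite hornerD hornerN.
have lb : forall c, gab g k c -> (n - d <= wR (sigma g f - c))%N.
  move=> c [v [qv [hv hc]]]; have [qp pnz sp dp _] := Hp v qv hv.
  rewrite (rowE c v hc).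
  have := wR_row qp fr; have := roots_dim pnz qp (@ker_roots _ _ _ U qp).
  rewrite dp -/U => h1 h2; rewrite -{1}h2 leq_subLR [(d + _)%N]addnC leq_add2l; exact: h1.
split; first exact: (dRC_lb gab0 lb).
move=> mf; split.
- move=> eqd.
  have [c [[v [qv [hv hc]]] wc]] := dRC_att (sigma g f) gab0.
  have [qp pnz sp dp mp] := Hp v qv hv.
  move: wc; rewrite eqd (rowE c v hc) => wc.
  have := wR_row qp fr; rewrite wc -/U => hdim.
  exists (U :&: lker (phi (f - v)))%VS; split; first exact: capvSl.
  have dimH : \dim (U :&: lker (phi (f - v))) = d by move: hdim; lia.
  split => //; exists v; split => //; split.
    by case: hv => [->|hv]; [left | right; lia].
  apply: prod_eq; [exact: mp | by rewrite sp dimH | exact: ker_roots].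
- move=> [H [HU [dH [v [qv [hv ev]]]]]].
  have hv' : v = 0 \/ (qdeg v < k)%N by case: hv => [->|hv]; [left | right; lia].
  have [qp pnz sp dp mp] := Hp v qv hv'.
  pose c : 'rV[L]_n := \row_j v.[g j].
  have hc : forall j, c ord0 j = v.[g j] by move=> j; rewrite mxE.
  have gc : gab g k c by exists v.
  have Hroots : forall h, h \in H -> (f - v).[h] = 0.
    move=> h hH; rewrite ev horner_prod (bigD1 (h : finvect_type L)) //=.
    by rewrite hornerXsubC subrr mul0r.
  have sub : (H <= U :&: lker (phi (f - v)))%VS.
    apply/subvP => h hH; rewrite memv_cap (subvP HU) //= memv_ker phiE //.
    by rewrite Hroots.
  have := dimvS sub; rewrite dH => ge.
  have := roots_dim pnz qp (@ker_roots _ _ _ U qp); rewrite dp => le.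
  have := wR_row qp fr; rewrite -/U => hw.
  apply/eqP; rewrite eqn_leq; apply/andP; split; last exact: (dRC_lb gab0 lb).
  apply: leq_trans (dRC_ub (sigma g f) gc) _.
  rewrite (rowE c v hc); move: hw; move: (wR _) => w hw.
  have e : \dim (U :&: lker (phi (f - v))) = d by apply/eqP; rewrite eqn_leq le ge.
  rewrite e in hw; lia.
Qed.
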